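(* Let $p\in(0,\infty)$ and let $f:\mathcal{W}_p(\mathcal{X})\to\mathcal{W}_p(\mathcal{X})$ be an isometric embedding, i.e. $W_p(f(\mu),f(\nu))=W_p(\mu,\nu)$ for all $\mu,\nu\in\mathcal{P}(\mathcal{X})$. Then there exists a unique family of measures $\Phi=(\varphi_{x,t})_{x\in\mathcal{X},\,t\in(0,1]}\in\mathcal{M}(\mathcal{X})^{\mathcal{X}\times(0,1]}$ satisfying (a) for all $x\neq y$: $S_{\varphi_{x,1}}\cap S_{\varphi_{y,1}}=\emptyset$; (b) for all $x\in\mathcal{X}$ and $0<t\le 1$: $\varphi_{x,t}(\mathcal{X})=t$; (c) for all $x\in\mathcal{X}$ and $0<s<t\le 1$: $\varphi_{x,s}\le\varphi_{x,t}$; and generating $f$ via $$f(\mu)=\sum_{x\in S_\mu}\varphi_{x,\mu(\{x\})}\qquad\text{for all }\mu\in\mathcal{P}(\mathcal{X}).$$ Conversely, every $\mathcal{X}\times(0,1]$-indexed family of measures in $\mathcal{M}(\mathcal{X})$ satisfying (a)–(c) generates an isometric embedding of $\mathcal{W}_p(\mathcal{X})$ via the formula $f(\mu)=\sum_{x\in S_\mu}\varphi_{x,\mu(\{x\})}$.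
   Context: Let $X$ be a countable set with at least two elements, equipped with the discrete metric $\rho$ ($\rho(x,y)=1$ if $x\neq y$, $\rho(x,x)=0$); write $\mathcal{X}=(X,\rho)$. $\mathcal{P}(\mathcal{X})$ and $\mathcal{M}(\mathcal{X})$ denote the probability measures and nonnegative finite measures on the power set of $\mathcal{X}$. For $\mu\in\mathcal{M}(\mathcal{X})$, $S_\mu=\{x\in\mathcal{X}:\mu(\{x\})>0\}$ is its support. For measures, $\alpha\le\beta$ means $\alpha(A)\le\beta(A)$ for all $A\subseteq\mathcal{X}$. For $\mu,\nu\in\mathcal{P}(\mathcal{X})$, a coupling is a probability measure $\pi$ on $\mathcal{X}^2$ with marginals $\mu,\nu$, and $W_p(\mu,\nu)=\big(\inf_\pi\int\rho^p\,d\pi\big)^{1/p}$ for $p\ge1$, $W_p(\mu,\nu)=\inf_\pi\int\rho^p\,d\pi$ for $0<p<1$. $\mathcal{W}_p(\mathcal{X})$ is the metric space $(\mathcal{P}(\mathcal{X}),W_p)$. An isometric embedding is a (not necessarily surjective) distance-preserving self-map of $\mathcal{W}_p(\mathcal{X})$. *)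

(* Defs.v *)
From HB Require Import structures.
From mathcomp Require Import all_boot all_order all_algebra.
From mathcomp Require Import all_classical all_reals all_analysis.
Set Implicit Arguments. Unset Strict Implicit. Unset Printing Implicit Defensive.
Import Order.TTheory GRing.Theory Num.Theory.
Local Open Scope classical_set_scope.
Local Open Scope ring_scope.

Definition discr (T : pointedType) : Type := T.
HB.instance Definition _ (T : pointedType) := Pointed.on (discr T).
HB.instance Definition _ (T : pointedType) :=
  @isMeasurable.Build default_measure_display (discr T) discrete_measurable
    discrete_measurable0 discrete_measurableC discrete_measurableU.

Section Wasserstein.
Context {R : realType} {T : pointedType}.

Definition rho (x y : T) : R := if x == y then 0 else 1.

Definition msupport (m : set (discr T) -> \bar R) : set T :=
  [set x | (0 < m [set x])%E].

Definition coupling (mu nu : probability (discr T) R) :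
    set (probability (discr (T * T)%type) R) :=
  [set pi | (forall A : set T, pi (fst @^-1` A) = mu A) /\
            (forall A : set T, pi (snd @^-1` A) = nu A)].

Definition tcost (p : R) (pi : probability (discr (T * T)%type) R) : \bar R :=
  (\int[pi]_z ((rho z.1 z.2) `^ p)%:E)%E.

Definition Wp (p : R) (mu nu : probability (discr T) R) : R :=
  let c := fine (ereal_inf [set tcost p pi | pi in coupling mu nu]) in
  if 1 <= p then c `^ p^-1 else c.

Definition isometric_embedding (p : R)
    (f : probability (discr T) R -> probability (discr T) R) : Prop :=
  forall mu nu, Wp p (f mu) (f nu) = Wp p mu nu.

(* a mfamily Phi = (phi_{x,t})_{x in X, t in (0,1]} of finite measures;
   values for t outside (0,1] are irrelevant *)
Definition mfamily := T -> R -> {finite_measure set (discr T) -> \bar R}.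

Definition family_ok (Phi : mfamily) : Prop :=
  [/\ (forall x y, x <> y -> msupport (Phi x 1) `&` msupport (Phi y 1) = set0),
      (forall x t, 0 < t <= 1 -> Phi x t setT = t%:E) &
      (forall x s t, 0 < s -> s < t -> t <= 1 ->
         forall A, (Phi x s A <= Phi x t A)%E)].

Definition generates (Phi : mfamily)
    (f : probability (discr T) R -> probability (discr T) R) : Prop :=
  forall mu (A : set T),
    f mu A = (\esum_(x in msupport mu) Phi x (fine (mu [set x])) A)%E.

End Wasserstein.

(* Main.v *)
Require Import Defs.
From HB Require Import structures.
From mathcomp Require Import all_boot all_order all_algebra.
From mathcomp Require Import all_classical all_reals all_analysis.
From mathcomp Require Import lra.
Import Order.TTheory GRing.Theory Num.Theory.
Local Open Scope classical_set_scope.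
Local Open Scope ring_scope.
Set Implicit Arguments. Unset Strict Implicit. Unset Printing Implicit Defensive.

Local Open Scope ereal_scope.

Section WM.
Context (R : realType) (T : pointedType).

Definition wm (w : T -> \bar R) (A : set (discr T)) : \bar R :=
  \esum_(z in A) maxe (w z) 0.

Variable w : T -> \bar R.

Let wm0 : wm w set0 = 0.
Proof. by rewrite /wm esum_set0. Qed.

Let wm_ge0 A : 0 <= wm w A.
Proof. by apply: esum_ge0 => z _; rewrite le_max lexx orbT. Qed.

Let wm_sa : semi_sigma_additive (wm w).
Proof.
move=> F mF tF mU.
have H : wm w (\bigcup_n F n) = \sum_(i <oo) wm w (F i).
  rewrite /wm. rewrite (esum_bigcupT F); last 2 first.
  - by move=> i j _ _; apply: tF.
  - by move=> x; rewrite le_max lexx orbT.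
  rewrite nneseries_esumT //.
  by move=> n; exact: wm_ge0.
rewrite H.
exact: is_cvg_nneseries.
Qed.

HB.instance Definition _ := isMeasure.Build _ _ _ (wm w) wm0 wm_ge0 wm_sa.

End WM.

Section WP.
Context (R : realType) (T : pointedType).

Definition wprob (w : T -> \bar R) : probability (discr T) R :=
  mnormalize (wm w) (dirac (point : discr T) : probability (discr T) R).

End WP.

Local Open Scope ereal_scope.

Section WP2.
Context (R : realType) (T : pointedType).

Lemma wmE (w : T -> \bar R) A : (forall z, 0 <= w z) ->
  wm w A = \esum_(z in A) w z.
Proof. by move=> w0; apply: eq_esum => z _; rewrite max_l. Qed.

Lemma mnormE d (T' : measurableType d) (mu : {measure set T' -> \bar R})
  (P : probability T' R) U : mu setT = 1 -> mnormalize mu P U = mu U.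
Proof.
move=> h; rewrite /mnormalize h.
have H1 : ((1 : \bar R) == 0) = false by rewrite eqe oner_eq0.
have H2 : ((1 : \bar R) == +oo) = false by [].
by rewrite H1 H2 /= invr1 mule1.
Qed.

Lemma wprobE (w : T -> \bar R) A : (forall z, 0 <= w z) ->
  \esum_(z in setT) w z = 1 -> wprob w A = \esum_(z in A) w z.
Proof.
move=> w0 w1; rewrite /wprob /= mnormE; first exact: wmE.
by rewrite -w1; exact: wmE.
Qed.

Lemma measure_image (T0 : choiceType) (T' : pointedType) (m : {measure set (discr T') -> \bar R})
   (A : set T0) (e : T0 -> T') : countable A -> {in A &, injective e} ->
  m (e @` A) = \esum_(x in A) m [set e x].
Proof.
move=> /countable_injP[g ginj] einj.
pose F n := e @` (A `&` (g @^-1` [set n])).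
have UF : e @` A = \bigcup_(n in g @` A) F n.
  apply/seteqP; split => [_ [x Ax <-]|_ [n [x Ax <-] [y [Ay /= gy] <-]]].
    by exists (g x); [exists x|exists x].
  by exists y.
have tF : trivIset (g @` A) F.
  move=> i j _ _ [_ [[x [Ax /= gx] <-] [y [Ay /= gy] eyx]]].
  by rewrite -gx -gy (einj y x) // inE.
rewrite UF measure_bigcup //= nneseries_esum //.
rewrite (_ : [set x | x \in g @` A] = g @` A); last first.
  by apply/seteqP; split => x; rewrite /= inE.
rewrite esum_image; last exact: ginj.
apply: eq_esum => x Ax; congr (m _).
apply/seteqP; split => [_ [y [Ay /= gy] <-]|_ ->] /=.
  by rewrite (ginj y x) // inE.
by exists x.
Qed.

Lemma measure_atoms (T' : pointedType) (m : {measure set (discr T') -> \bar R})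
   (A : set T') : countable A -> m A = \esum_(x in A) m [set x].
Proof.
move=> cA; have := @measure_image T' T' m A id cA (fun x y _ _ => id).
by rewrite image_id.
Qed.

End WP2.

Local Open Scope ereal_scope.

Section ES.
Context (R : realType) (T : choiceType).
Implicit Types (a b : T -> \bar R) (S : set T).

Lemma esum_term S a x : (forall i, S i -> 0 <= a i) -> S x ->
  a x <= \esum_(i in S) a i.
Proof.
move=> a0 Sx; rewrite -(esum_set1 (a := a)) ?a0 //.
apply: esum_ge; exists [set x]; last by rewrite esum_set1 ?a0 // fsbig_set1.
by split; [exact: finite_set1|move=> y ->].
Qed.

Lemma esum_eq0P S a x : (forall i, S i -> 0 <= a i) ->
  \esum_(i in S) a i = 0 -> S x -> a x = 0.
Proof.
move=> a0 s0 Sx; apply/eqP; rewrite eq_le a0 // andbT -s0.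
exact: esum_term.
Qed.

Lemma esum_single S a x : (forall i, S i -> i <> x -> a i = 0) -> S x ->
  0 <= a x -> \esum_(i in S) a i = a x.
Proof.
move=> a0 Sx ax0.
rewrite (esumID [set x]); last first.
  by move=> i Si; case: (eqVneq i x) => [->//|/eqP ix]; rewrite a0.
rewrite (esum1 (D := S `&` ~` [set x])) ?adde0; last first.
  by move=> i [Si /= ix]; apply: a0.
rewrite (_ : S `&` [set x] = [set x]) ?esum_set1 //.
by apply/seteqP; split => [y [] //|y -> ]; split.
Qed.

Lemma esum_out S a : (forall i, S i -> a i = 0) -> \esum_(i in S) a i = 0.
Proof. exact: esum1. Qed.

Lemma esum_swap (T2 : choiceType) (A : set T) (B : set T2)
    (a : T -> T2 -> \bar R) : (forall i j, A i -> B j -> 0 <= a i j) ->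
  \esum_(i in A) \esum_(j in B) a i j = \esum_(j in B) \esum_(i in A) a i j.
Proof.
move=> a0; rewrite esum_esum // esum_esum; last by move=> i j Bi Aj; apply: a0.
rewrite (reindex_esum (B `*`` fun=> A) (A `*`` fun=> B) (fun x => (x.2, x.1))) //.
split => //=.
- by move=> [i j] [/= ? ?]; split.
- by move=> [i j] [k l] /= _ _ [-> ->].
- by move=> [i j] [/= ? ?]; exists (j, i).
Qed.

Lemma esumZl S a (k : R) : (0 <= k)%R -> (forall i, 0 <= a i) ->
  \esum_(i in S) (k%:E * a i) = k%:E * \esum_(i in S) a i.
Proof.
move=> k0 a0; rewrite /esum -ereal_supZl //; last first.
  by apply/set0P; exists 0; exists set0; [exact: fsets_set0|rewrite fsbig_set0].
congr ereal_sup; apply/seteqP; split.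
  move=> _ [X XS <-]; exists (\sum_(i \in X) a i); first by exists X.
  by rewrite ge0_mule_fsumr.
by move=> _ [_ [X XS <-] <-]; exists X => //; rewrite ge0_mule_fsumr.
Qed.

Lemma esum_le_eq S a b : (forall i, S i -> 0 <= a i) ->
  (forall i, S i -> a i <= b i) ->
  \esum_(i in S) b i \is a fin_num ->
  \esum_(i in S) a i = \esum_(i in S) b i -> forall x, S x -> a x = b x.
Proof.
move=> a0 ab bfin sab x Sx.
have afin i : S i -> a i \is a fin_num.
  move=> Si; rewrite ge0_fin_numE ?a0 //.
  apply: (le_lt_trans (ab i Si)); apply: (le_lt_trans (esum_term _ Si)).
    by move=> j Sj; apply: le_trans (ab j Sj); exact: a0.
  by rewrite ltey_eq bfin.
have b0 i : S i -> 0 <= b i by move=> Si; apply: le_trans (ab i Si); exact: a0.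
have bafin i : S i -> 0 <= b i - a i by move=> Si; rewrite suber_ge0 ?afin // ab.
have E : \esum_(i in S) b i = \esum_(i in S) a i + \esum_(i in S) (b i - a i).
  rewrite -esumD; [|exact: a0|exact: bafin].
  by apply: eq_esum => i Si; rewrite addeC subeK ?afin.
have H0 : \esum_(i in S) (b i - a i) = 0.
  move: E; rewrite sab => E.
  by rewrite -(addeK (\esum_(i in S) (b i - a i)) bfin) (addeC (\esum_(i in S) (b i - a i))) -E subee.
have := esum_eq0P bafin H0 Sx => h.
by rewrite -(subeK (b x) (afin x Sx)) h add0e.
Qed.

End ES.

Local Open Scope ereal_scope.

Hint Extern 0 (_.-measurable _) => exact: I : core.
Hint Extern 0 (is_true (_ \in _.-measurable)) => (rewrite inE; exact: I) : core.

Section Prod.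
Context (R : realType) (T : pointedType).

Lemma esum_fst (w : T * T -> \bar R) (A : set T) : (forall z, 0 <= w z) ->
  \esum_(z in fst @^-1` A) w z = \esum_(x in A) \esum_(y in setT) w (x, y).
Proof.
move=> w0; rewrite esum_esum //.
have -> : A `*`` (fun=> [set: T]) = fst @^-1` A.
  by apply/seteqP; split => [[a b] [] //|[a b] /= Aa]; split.
by apply: eq_esum => -[a b].
Qed.

Lemma esum_snd (w : T * T -> \bar R) (A : set T) : (forall z, 0 <= w z) ->
  \esum_(z in snd @^-1` A) w z = \esum_(y in A) \esum_(x in setT) w (x, y).
Proof.
move=> w0; rewrite (esum_esum (a := fun y x => w (x, y))) //.
rewrite (reindex_esum (A `*`` fun=> setT) (snd @^-1` A) (fun k => (k.2, k.1))) //.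
split => //=.
- by move=> [a b] [/= ? ?].
- by move=> [a b] [c d] /= _ _ [-> ->].
- by move=> [a b] /= Ab; exists (b, a).
Qed.

End Prod.

Section W.
Context (R : realType) (T : pointedType) (hT : countable [set: T]).
Implicit Types (P Q : probability (discr T) R).

Lemma cntA (A : set T) : countable A.
Proof. exact: sub_countable (subset_card_le (subsetT A)) hT. Qed.

Lemma patom_fin (P : {finite_measure set (discr T) -> \bar R}) (A : set T) :
  P A \is a fin_num.
Proof. exact: fin_num_measure. Qed.

Lemma patomE (P : {finite_measure set (discr T) -> \bar R}) (A : set T) :
  P A = (fine (P A))%:E.
Proof. by rewrite fineK // patom_fin. Qed.

Lemma patom_ge0 (P : {finite_measure set (discr T) -> \bar R}) (A : set T) :
  (0 <= fine (P A))%R.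
Proof. by apply: fine_ge0. Qed.

Lemma psum1 P : \esum_(x in setT) P [set x] = 1.
Proof. by rewrite -measure_atoms; [exact: probability_setT|exact: hT]. Qed.

Definition ov P Q := \esum_(x in [set: T]) mine (P [set x]) (Q [set x]).

Lemma ov_ge0 P Q : 0 <= ov P Q.
Proof. by apply: esum_ge0 => x _; rewrite le_min !measure_ge0. Qed.

Lemma ov_le1 P Q : ov P Q <= 1.
Proof.
rewrite -(psum1 P); apply: le_esum => x _; by rewrite ge_min lexx.
Qed.

Lemma ov_fin P Q : ov P Q \is a fin_num.
Proof.
rewrite ge0_fin_numE ?ov_ge0 //; apply: (le_lt_trans (ov_le1 P Q)).
exact: ltey.
Qed.

Definition diagT : set (T * T) := [set (x, x) | x in [set: T]].

Lemma tcostE p (hp : (0 < p)%R) (pi : probability (discr (T * T)%type) R) :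
  tcost p pi = 1 - \esum_(x in setT) pi [set (x, x)].
Proof.
rewrite /tcost (eq_integral (fun z : discr (T * T)%type => (\1_(~` diagT) z)%:E)); last first.
  move=> [a b] _ /=; rewrite /rho indicE; case: eqVneq => [<-|ab].
    rewrite powR0 ?gt_eqF //.
    suff -> : ((a, a) \in ~` diagT) = false by [].
    by apply: negbTE; rewrite in_setC negbK inE; exists a.
  rewrite powR1.
  suff -> : ((a, b) \in ~` diagT) = true by [].
  rewrite in_setC; apply/negP; rewrite inE => -[c _ [ca cb]].
  by move: ab; rewrite -ca -cb eqxx.
rewrite integral_indic // setIT.
change (pi (~` diagT) = 1 - \esum_(x in setT) pi [set (x, x)]); rewrite probability_setC //; congr (_ - _).
exact: (@measure_image R T _ pi setT (fun x => (x, x)) (cntA setT) (fun x y _ _ h => f_equal fst h)).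
Qed.

Lemma cost_lb p (hp : (0 < p)%R) P Q pi : coupling P Q pi ->
  1 - ov P Q <= tcost p pi.
Proof.
move=> [h1 h2]; rewrite tcostE //; apply: leeB => //.
apply: le_esum => x _; rewrite le_min; apply/andP; split.
  by rewrite -h1; apply: le_measure; rewrite ?inE // => z ->.
by rewrite -h2; apply: le_measure; rewrite ?inE // => z ->.
Qed.

End W.

Local Open Scope ereal_scope.

Hint Extern 0 (_.-measurable _) => exact: I : core.
Hint Extern 0 (is_true (_ \in _.-measurable)) => (rewrite inE; exact: I) : core.

Section Opt.
Context (R : realType) (T : pointedType) (hT : countable [set: T]).
Variables (mu nu : probability (discr T) R).

Let pm x : R := fine (mu [set x]).
Let pn x : R := fine (nu [set x]).
Let mm x : R := Num.min (pm x) (pn x).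
Let S := ov mu nu.
Let r : R := fine (1 - S).
Let c : R := r^-1.

Let pm0 x : (0 <= pm x)%R. Proof. exact: patom_ge0. Qed.
Let pn0 x : (0 <= pn x)%R. Proof. exact: patom_ge0. Qed.
Let mm0 x : (0 <= mm x)%R. Proof. by rewrite /mm le_min pm0 pn0. Qed.
Let pmm x : (0 <= pm x - mm x)%R. Proof. by rewrite subr_ge0 /mm ge_min lexx. Qed.
Let pnm x : (0 <= pn x - mm x)%R. Proof. by rewrite subr_ge0 /mm ge_min lexx orbT. Qed.

Let pmE x : mu [set x] = (pm x)%:E. Proof. exact: patomE. Qed.
Let pnE x : nu [set x] = (pn x)%:E. Proof. exact: patomE. Qed.

Let SE : S = \esum_(x in setT) (mm x)%:E.
Proof. by apply: eq_esum => x _; rewrite pmE pnE /mm EFin_min. Qed.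

Let rE : r%:E = 1 - S.
Proof. by rewrite /r fineK // fin_numB /= ov_fin. Qed.

Let r0 : (0 <= r)%R.
Proof. by rewrite -lee_fin rE suber_ge0 ?ov_fin ?ov_le1. Qed.

Let c0 : (0 <= c)%R. Proof. by rewrite /c invr_ge0. Qed.

Let sumpm : \esum_(x in setT) (pm x)%:E = 1.
Proof. by rewrite -(psum1 hT mu); apply: eq_esum => x _; rewrite pmE. Qed.
Let sumpn : \esum_(x in setT) (pn x)%:E = 1.
Proof. by rewrite -(psum1 hT nu); apply: eq_esum => x _; rewrite pnE. Qed.

Let resE (q : T -> R) : (forall x, 0 <= q x - mm x)%R ->
  \esum_(x in setT) (q x)%:E = 1 ->
  \esum_(x in setT) (q x - mm x)%:E = r%:E.
Proof.
move=> qm q1.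
have : \esum_(x in setT) (q x)%:E = S + \esum_(x in setT) (q x - mm x)%:E.
  rewrite SE -esumD //; last by move=> x _; rewrite lee_fin.
    by apply: eq_esum => x _; rewrite -EFinD addrC subrK.
  by move=> x _; rewrite lee_fin.
rewrite q1 rE => ->.
by rewrite addeC addeK // ov_fin.
Qed.

Let key (q : T -> R) : (forall x, 0 <= q x - mm x)%R ->
  \esum_(x in setT) (q x)%:E = 1 ->
  forall x, ((q x - mm x) * c * r = q x - mm x)%R.
Proof.
move=> qm q1 x; have [r00|rn0] := eqVneq r 0%R.
  have : (q x - mm x)%:E = 0.
    apply: (esum_eq0P (S := setT) (a := fun x => (q x - mm x)%:E)) => //.
      by move=> i _; rewrite lee_fin.
    by rewrite resE // r00.
  by move=> [->]; rewrite !mul0r.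
by rewrite -mulrA /c mulVf // mulr1.
Qed.

Definition wopt (z : T * T) : \bar R :=
  ((if z.1 == z.2 then mm z.1 else 0) + (pm z.1 - mm z.1) * (pn z.2 - mm z.2) * c)%:E.

Let wopt0 z : 0 <= wopt z.
Proof.
rewrite /wopt lee_fin; apply: addr_ge0; first by case: ifP.
by apply: mulr_ge0 => //; apply: mulr_ge0.
Qed.

Let single (x : T) :
  \esum_(y in setT) (if x == y then mm x else 0)%:E = (mm x)%:E.
Proof.
rewrite (esum_single (x := x)) ?eqxx ?lee_fin //.
by move=> i _ ix; rewrite (_ : (x == i) = false) //; apply/eqP => xi; apply: ix.
Qed.

Let single' (y : T) :
  \esum_(x in setT) (if x == y then mm x else 0)%:E = (mm y)%:E.
Proof.
rewrite (esum_single (x := y)) ?eqxx ?lee_fin //.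
by move=> i _ ix; rewrite (_ : (i == y) = false) //; apply/eqP.
Qed.

Lemma wopt_marg1 A : \esum_(z in fst @^-1` A) wopt z = \esum_(x in A) mu [set x].
Proof.
rewrite esum_fst //; apply: eq_esum => x _.
rewrite (eq_esum (b := fun y => (if x == y then mm x else 0)%:E +
     ((pm x - mm x) * c)%:E * (pn y - mm y)%:E)); last first.
  by move=> y _; rewrite /wopt /= -EFinM -EFinD mulrAC.
rewrite esumD; last 2 first.
  - by move=> y _; rewrite lee_fin; case: ifP.
  - by move=> y _; rewrite -EFinM lee_fin; apply: mulr_ge0 => //; apply: mulr_ge0.
rewrite single esumZl; last 2 first.
  - by apply: mulr_ge0.
  - by move=> y; rewrite lee_fin.
rewrite resE // -EFinM -EFinD key // pmE.
by rewrite addrC subrK.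
Qed.

Lemma wopt_marg2 A : \esum_(z in snd @^-1` A) wopt z = \esum_(y in A) nu [set y].
Proof.
rewrite esum_snd //; apply: eq_esum => y _.
rewrite (eq_esum (b := fun x => (if x == y then mm x else 0)%:E +
     ((pn y - mm y) * c)%:E * (pm x - mm x)%:E)); last first.
  move=> x _; rewrite /wopt /= -EFinM -EFinD.
  by rewrite [in RHS]mulrC mulrA.
rewrite esumD; last 2 first.
  - by move=> x _; rewrite lee_fin; case: ifP.
  - by move=> x _; rewrite -EFinM lee_fin; apply: mulr_ge0 => //; apply: mulr_ge0.
rewrite single' esumZl; last 2 first.
  - by apply: mulr_ge0.
  - by move=> x; rewrite lee_fin.
rewrite resE // -EFinM -EFinD key // pnE.
by rewrite addrC subrK.
Qed.

Lemma wopt1 : \esum_(z in setT) wopt z = 1.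
Proof.
have -> : [set: T * T] = fst @^-1` [set: T] by [].
rewrite wopt_marg1; exact: psum1.
Qed.

Definition popt : probability (discr (T * T)%type) R := wprob wopt.

Lemma popt_coupling : coupling mu nu popt.
Proof.
split => A.
  rewrite /popt wprobE //; last exact: wopt1.
  rewrite wopt_marg1; apply/esym; apply: measure_atoms; exact: cntA.
rewrite /popt wprobE //; last exact: wopt1.
rewrite wopt_marg2; apply/esym; apply: measure_atoms; exact: cntA.
Qed.

Lemma popt_cost p : (0 < p)%R -> tcost p popt = 1 - ov mu nu.
Proof.
move=> hp; rewrite tcostE //; congr (_ - _); rewrite -[ov mu nu]/S SE.
apply: eq_esum => x _; rewrite /popt wprobE //; last exact: wopt1.
rewrite esum_set1 // /wopt /= eqxx.
suff -> : ((pm x - mm x) * (pn x - mm x) = 0)%R by rewrite mul0r addr0.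
rewrite /mm; case: (leP (pm x) (pn x)) => h.
  by rewrite subrr mul0r.
by rewrite subrr mulr0.
Qed.

End Opt.

Section Wp.
Context (R : realType) (T : pointedType) (hT : countable [set: T]).

Lemma inf_cost p (hp : (0 < p)%R) (mu nu : probability (discr T) R) :
  ereal_inf [set tcost p pi | pi in coupling mu nu] = 1 - ov mu nu.
Proof.
apply/eqP; rewrite eq_le; apply/andP; split.
  rewrite -(popt_cost hT mu nu hp); apply: ereal_inf_lbound.
  by exists (popt mu nu) => //; exact: popt_coupling.
by apply/ereal_infP => _ [pi cp <-]; exact: cost_lb.
Qed.

Definition Gp (p c : R) : R := (if 1 <= p then c `^ p^-1 else c)%R.

Lemma WpE p (hp : (0 < p)%R) (mu nu : probability (discr T) R) :
  Wp p mu nu = Gp p (fine (1 - ov mu nu)).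
Proof. by rewrite /Wp inf_cost. Qed.

End Wp.

Local Open Scope ereal_scope.

Section Iso.
Context (R : realType) (T : pointedType) (hT : countable [set: T]).

Lemma Gp_inj (p a b : R) : (0 < p)%R -> (0 <= a)%R -> (0 <= b)%R ->
  Gp p a = Gp p b -> a = b.
Proof.
move=> hp a0 b0; rewrite /Gp; case: ifP => // _ h.
have ea : a = ((a `^ p^-1) `^ p)%R by rewrite -powRrM mulVf ?gt_eqF // powRr1.
have eb : b = ((b `^ p^-1) `^ p)%R by rewrite -powRrM mulVf ?gt_eqF // powRr1.
by rewrite ea eb h.
Qed.

Lemma ov_fineE (m1 m2 : probability (discr T) R) :
  (fine (1 - ov m1 m2))%:E = 1 - ov m1 m2.
Proof. by rewrite fineK // fin_numB /= (ov_fin hT). Qed.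

Lemma Wp_ov p (hp : (0 < p)%R) (m1 m2 m3 m4 : probability (discr T) R) :
  ov m1 m2 = ov m3 m4 -> Wp p m1 m2 = Wp p m3 m4.
Proof. by move=> h; rewrite !WpE // h. Qed.

Lemma ov_Wp p (hp : (0 < p)%R) (m1 m2 m3 m4 : probability (discr T) R) :
  Wp p m1 m2 = Wp p m3 m4 -> ov m1 m2 = ov m3 m4.
Proof.
have g0 (a b : probability (discr T) R) : (0 <= fine (1 - ov a b))%R.
  by apply: fine_ge0; rewrite suber_ge0 ?(ov_fin hT) ?(ov_le1 hT).
rewrite !WpE // => /(Gp_inj hp (g0 _ _) (g0 _ _)) h.
have := congr1 EFin h; rewrite !ov_fineE.
rewrite -(fineK (ov_fin hT m1 m2)) -(fineK (ov_fin hT m3 m4)) -!EFinB.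
by move=> [] h2; congr EFin; lra.
Qed.

End Iso.

Local Open Scope ereal_scope.

Hint Extern 0 (_.-measurable _) => exact: I : core.
Hint Extern 0 (is_true (_ \in _.-measurable)) => (rewrite inE; exact: I) : core.

Section Dl.
Context (R : realType) (T : pointedType) (hT : countable [set: T]).

Definition dl (x : T) : probability (discr T) R := @dirac _ (discr T) x R.

Lemma dl_atom x z : dl x [set z] = if z == x then 1 else 0.
Proof.
rewrite /dl /= diracE; case: eqVneq => [->|zx].
  by rewrite (_ : (x \in [set x]) = true) //; apply/mem_set.
rewrite (_ : (x \in [set z]) = false) //; apply: memNset => /= e.
by move: zx; rewrite e eqxx.
Qed.

Lemma m_atom_le1 (m : probability (discr T) R) z : m [set z] <= 1.
Proof. exact: probability_le1. Qed.

Lemma ov_dl x (m : probability (discr T) R) : ov (dl x) m = m [set x].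
Proof.
rewrite /ov (esum_single (x := x)) //.
- by rewrite dl_atom eqxx; apply/min_idPr; exact: m_atom_le1.
- by move=> i _ ix; rewrite dl_atom ifF; [apply/min_idPl|apply/eqP].
- by rewrite le_min !measure_ge0.
Qed.

Lemma atom0 (m : {measure set (discr T) -> \bar R}) z :
  ~ (0 < m [set z]) -> m [set z] = 0.
Proof.
move=> h; apply/eqP; rewrite eq_le measure_ge0 andbT leNgt; exact/negP.
Qed.

End Dl.

Section Fwd.
Context (R : realType) (T : pointedType) (hT : countable [set: T]).
Variable f : probability (discr T) R -> probability (discr T) R.
Hypothesis hf : forall m1 m2, ov (f m1) (f m2) = ov m1 m2.

Let F x := f (dl R x).

Lemma Fdisj x y z : 0 < F x [set z] -> 0 < F y [set z] -> x = y.
Proof.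
move=> hx hy; apply: contrapT => xy.
have h0 : ov (F x) (F y) = 0.
  by rewrite /F hf ov_dl dl_atom ifF //; apply/eqP => e; apply: xy.
have := @esum_eq0P R T setT (fun z => mine (F x [set z]) (F y [set z])) z _ h0 I.
move=> /(_ _) h.
have : 0 < mine (F x [set z]) (F y [set z]) by rewrite lt_min hx hy.
by rewrite h ?ltxx // => i _; rewrite le_min !measure_ge0.
Qed.

Lemma Fz x z w : 0 < F x [set z] -> w <> x -> F w [set z] = 0.
Proof.
move=> hx wx; apply: atom0 => hw; apply: wx; exact: (Fdisj hw hx).
Qed.

Lemma mine0l (a : \bar R) : 0 <= a -> mine 0 a = 0.
Proof. by move=> a0; apply/min_idPl. Qed.

Lemma fpsi m z : f m [set z] = \esum_(x in setT) mine (F x [set z]) (f m [set z]).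
Proof.
pose h z := \esum_(x in [set: T]) mine (F x [set z]) (f m [set z]).
have hle z' : h z' <= f m [set z'].
  rewrite /h; case: (pselect (exists x0, 0 < F x0 [set z'])) => [[x0 hx0]|nx].
    rewrite (esum_single (x := x0)) //.
    - by rewrite ge_min lexx orbT.
    - by move=> i _ ix; rewrite (Fz hx0 ix) mine0l.
    - by rewrite le_min !measure_ge0.
  rewrite esum1 // => i _; rewrite atom0 ?mine0l // => hi; apply: nx; by exists i.
have h0 z' : 0 <= h z' by apply: esum_ge0 => i _; rewrite le_min !measure_ge0.
have sh : \esum_(z in setT) h z = \esum_(z in setT) f m [set z].
  rewrite (psum1 hT (f m)) /h esum_swap; last by move=> *; rewrite le_min !measure_ge0.
  transitivity (\esum_(x in [set: T]) ov (dl R x) m).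
    by apply: eq_esum => x _; rewrite -hf.
  rewrite -(psum1 hT m); apply: eq_esum => x _; exact: ov_dl.
have bfin : \esum_(z in [set: T]) f m [set z] \is a fin_num by rewrite psum1.
symmetry; exact: (@esum_le_eq R T setT h (fun z => f m [set z]) (fun z _ => h0 z) (fun z _ => hle z) bfin sh z I).
Qed.

Lemma fle x m z : 0 < F x [set z] -> f m [set z] <= F x [set z].
Proof.
move=> hx; rewrite fpsi (esum_single (x := x)) //.
- by rewrite ge_min lexx.
- by move=> i _ ix; rewrite (Fz hx ix) mine0l.
- by rewrite le_min !measure_ge0.
Qed.

Lemma fnone m z : (forall x, ~ (0 < F x [set z])) -> f m [set z] = 0.
Proof.
move=> nx; rewrite fpsi esum1 // => i _; rewrite atom0 ?mine0l //; exact: nx.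
Qed.

Definition psi x m z := if 0 < F x [set z] then f m [set z] else 0.

Lemma psi_ge0 x m z : 0 <= psi x m z.
Proof. by rewrite /psi; case: ifP. Qed.

Lemma min_psi x m z : mine (F x [set z]) (f m [set z]) = psi x m z.
Proof.
rewrite /psi; case: ifPn => hx.
  by apply/min_idPr; exact: fle.
by rewrite atom0 ?mine0l //; exact/negP.
Qed.

Lemma psi_sum x m : \esum_(z in setT) psi x m z = m [set x].
Proof.
rewrite -(ov_dl x m) -hf /ov; apply: eq_esum => z _; exact/esym/min_psi.
Qed.

Lemma fpsi2 m z : f m [set z] = \esum_(x in setT) psi x m z.
Proof. by rewrite {1}fpsi; apply: eq_esum => x _; exact: min_psi. Qed.

Lemma psi_out x m z : ~ (0 < F x [set z]) -> psi x m z = 0.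
Proof. by move=> h; rewrite /psi ifF //; exact/negP. Qed.

Lemma psi_min (m1 m2 : probability (discr T) R) x :
  \esum_(z in setT) mine (psi x m1 z) (psi x m2 z) = mine (m1 [set x]) (m2 [set x]).
Proof.
have step z : mine (f m1 [set z]) (f m2 [set z]) =
    \esum_(w in setT) mine (psi w m1 z) (psi w m2 z).
  case: (pselect (exists x0, 0 < F x0 [set z])) => [[x0 hx0]|nx].
    rewrite (esum_single (x := x0)) //.
    - by rewrite /psi hx0.
    - by move=> i _ ix; rewrite !psi_out ?mine0l // => hi; apply: ix; exact: Fdisj hi hx0.
    - by rewrite le_min !psi_ge0.
  rewrite !fnone ?mine0l // => [|i hi|i hi]; try by apply: nx; exists i.
  by rewrite esum1 // => i _; rewrite !psi_out ?mine0l // => hi; apply: nx; exists i.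
have a0 w : 0 <= \esum_(z in setT) mine (psi w m1 z) (psi w m2 z).
  by apply: esum_ge0 => z _; rewrite le_min !psi_ge0.
have ab w : \esum_(z in setT) mine (psi w m1 z) (psi w m2 z) <= mine (m1 [set w]) (m2 [set w]).
  rewrite le_min -!psi_sum; apply/andP; split; apply: le_esum => z _.
    by rewrite ge_min lexx.
  by rewrite ge_min lexx orbT.
have sab : \esum_(w in setT) \esum_(z in setT) mine (psi w m1 z) (psi w m2 z) =
           ov m1 m2.
  rewrite esum_swap; last by move=> *; rewrite le_min !psi_ge0.
  rewrite -hf /ov; apply: eq_esum => z _; exact/esym/step.
exact: (@esum_le_eq R T setT _ _ (fun w _ => a0 w) (fun w _ => ab w) (ov_fin hT m1 m2) sab x I).
Qed.

Lemma psi_mono (m1 m2 : probability (discr T) R) x : m1 [set x] <= m2 [set x] ->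
  forall z, psi x m1 z <= psi x m2 z.
Proof.
move=> le12 z.
have e : \esum_(z in setT) mine (psi x m1 z) (psi x m2 z) = \esum_(z in setT) psi x m1 z.
  by rewrite psi_min psi_sum; apply/min_idPl.
have fin : \esum_(z in setT) psi x m1 z \is a fin_num.
  by rewrite psi_sum; exact: patom_fin.
have a0 z' : [set: T] z' -> 0 <= mine (psi x m1 z') (psi x m2 z').
  by move=> _; rewrite le_min !psi_ge0.
have ab z' : [set: T] z' -> mine (psi x m1 z') (psi x m2 z') <= psi x m1 z'.
  by move=> _; rewrite ge_min lexx.
have := @esum_le_eq R T setT (fun z => mine (psi x m1 z) (psi x m2 z)) (psi x m1) a0 ab fin e z I.
by move/min_idPl.
Qed.

End Fwd.

Local Open Scope ereal_scope.

Hint Extern 0 (_.-measurable _) => exact: I : core.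
Hint Extern 0 (is_true (_ \in _.-measurable)) => (rewrite inE; exact: I) : core.

Section Fwd2.
Context (R : realType) (T : pointedType) (hT : countable [set: T]).
Variables (x0 y0 : T) (hxy : x0 <> y0).
Variable f : probability (discr T) R -> probability (discr T) R.
Hypothesis hf : forall m1 m2, ov (f m1) (f m2) = ov m1 m2.

Let F x := f (dl R x).

Definition yof (x : T) := if x == x0 then y0 else x0.

Lemma yof_neq x : yof x <> x.
Proof.
rewrite /yof; case: eqVneq => [->|h] e; first exact: hxy (esym e).
by move: h; rewrite e eqxx.
Qed.

Definition clamp (t : R) : R := Num.min (Num.max t 0%R) 1%R.

Lemma clamp0 t : (0 <= clamp t)%R.
Proof. by rewrite /clamp le_min ler01 le_max lexx orbT. Qed.

Lemma clamp1 t : (clamp t <= 1)%R.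
Proof. by rewrite /clamp ge_min lexx orbT. Qed.

Lemma clamp_id t : (0 <= t)%R -> (t <= 1)%R -> clamp t = t.
Proof. by move=> t0 t1; rewrite /clamp max_l // min_l. Qed.

Definition vw (x : T) (t : R) (z : T) : \bar R :=
  (if z == x then (clamp t)%:E else 0) + (if z == yof x then (1 - clamp t)%:E else 0).

Lemma vw0 x t z : 0 <= vw x t z.
Proof.
rewrite /vw; apply: adde_ge0; case: ifP => // _; rewrite lee_fin ?clamp0 //.
by rewrite subr_ge0 clamp1.
Qed.

Lemma vw_sum x t : \esum_(z in setT) vw x t z = 1.
Proof.
rewrite esumD; last 2 first.
- by move=> z _; case: ifP => // _; rewrite lee_fin clamp0.
- by move=> z _; case: ifP => // _; rewrite lee_fin subr_ge0 clamp1.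
rewrite (esum_single (x := x)) ?eqxx //; last 2 first.
- by move=> i _ ix; rewrite ifF //; apply/eqP.
- by rewrite lee_fin clamp0.
rewrite (esum_single (x := yof x)) ?eqxx //; last 2 first.
- by move=> i _ ix; rewrite ifF //; apply/eqP.
- by rewrite lee_fin subr_ge0 clamp1.
by rewrite -EFinD addrC subrK.
Qed.

Definition nu x t : probability (discr T) R := wprob (vw x t).

Lemma nu_atom x t z : nu x t [set z] = vw x t z.
Proof. by rewrite /nu wprobE ?esum_set1 ?vw0 // => *; [exact: vw0|exact: vw_sum]. Qed.

Lemma nu_x x t : nu x t [set x] = (clamp t)%:E.
Proof.
rewrite nu_atom /vw eqxx ifF ?adde0 //; apply/eqP => e; exact: (yof_neq (esym e)).
Qed.

Definition Sx (x : T) : set (discr T) := [set z | 0 < F x [set z]].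

Definition Phi : mfamily := fun x t =>
  mrestr (f (nu x t)) (I : measurable (Sx x)).

Lemma PhiE x t A : Phi x t A = \esum_(z in A) psi f x (nu x t) z.
Proof.
transitivity (f (nu x t) (A `&` Sx x)); first by [].
rewrite measure_atoms; last exact: cntA.
rewrite esum_mkcondr; apply: eq_esum => z _; rewrite /psi.
case: ifPn => h; first by rewrite ifT //; exact: (set_mem h).
by rewrite ifF //; apply/negbTE; apply: contra h => h'; exact: mem_set.
Qed.

Lemma Phi_ok : family_ok Phi.
Proof.
split.
- move=> x y xy; apply/seteqP; split => // z [hx hy].
  rewrite /msupport /= PhiE esum_set1 ?psi_ge0 // in hx.
  rewrite /msupport /= PhiE esum_set1 ?psi_ge0 // in hy.
  have gx : 0 < F x [set z].
    by apply: contrapT => h; move: hx; rewrite psi_out // ltxx.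
  have gy : 0 < F y [set z].
    by apply: contrapT => h; move: hy; rewrite psi_out // ltxx.
  exact: xy (Fdisj hf gx gy).
- move=> x t /andP[t0 t1]; rewrite PhiE psi_sum // nu_x clamp_id //; exact: ltW.
- move=> x s t s0 st t1 A; rewrite !PhiE; apply: le_esum => z _.
  apply: psi_mono => //; rewrite !nu_x lee_fin !clamp_id //; try exact: ltW.
  + exact: le_trans (ltW s0) (ltW st).
  + exact: le_trans (ltW st) t1.
Qed.

Lemma fine_atom01 (m : probability (discr T) R) z :
  (0 <= fine (m [set z]))%R /\ (fine (m [set z]) <= 1)%R.
Proof.
split; first exact: patom_ge0.
by rewrite -fine1; apply: fine_le; rewrite ?patom_fin //; exact: m_atom_le1.
Qed.

Lemma nu_fine x (m : probability (discr T) R) :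
  nu x (fine (m [set x])) [set x] = m [set x].
Proof.
have [h0 h1] := fine_atom01 m x.
by rewrite nu_x clamp_id // fineK // patom_fin.
Qed.

Lemma Phi_gen : generates Phi f.
Proof.
move=> mu A.
rewrite measure_atoms; last exact: cntA.
transitivity (\esum_(z in A) \esum_(x in setT) psi f x mu z).
  by apply: eq_esum => z _; exact: fpsi2.
rewrite esum_swap; last by move=> *; exact: psi_ge0.
rewrite (esumID (msupport mu)); last by move=> *; apply: esum_ge0 => *; exact: psi_ge0.
rewrite [X in _ + X]esum1 ?adde0; last first.
  move=> x [_ nx]; apply: esum1 => z _.
  have m0 : mu [set x] = 0 by apply: atom0.
  apply: (@esum_eq0P R T setT (psi f x mu)) => //.
    by move=> *; exact: psi_ge0.
  by rewrite psi_sum.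
rewrite setTI; apply: eq_esum => x hx; rewrite PhiE.
apply: eq_esum => z _; apply/le_anti/andP; split; apply: psi_mono => //;
  by rewrite nu_fine.
Qed.

Lemma Phi_uniq (Psi : @mfamily R T) : family_ok Psi -> generates Psi f ->
  forall x t, (0 < t <= 1)%R -> forall A, Psi x t A = Phi x t A.
Proof.
move=> [Pa Pb Pc] gen x t /andP[t0 t1] A.
have U1 w B : F w B = Psi w 1%R B.
  rewrite /F gen.
  have -> : msupport (dl R w) = [set w].
    apply/seteqP; split => z; rewrite /msupport /= dl_atom.
      by case: eqVneq => // _; rewrite ltxx.
    by move=> ->; rewrite eqxx lte01.
  by rewrite esum_set1 // dl_atom eqxx fine1.
have U2 w s B : (0 < s)%R -> (s <= 1)%R -> Psi w s B <= F w B.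
  move=> s0 s1; rewrite U1; case: (ltP s 1%R) => [s1'|s1'].
    exact: Pc.
  by rewrite (_ : s = 1%R) //; apply/le_anti; rewrite s1 s1'.
have split : Psi x t A = Psi x t (A `&` Sx x) + Psi x t (A `&` ~` Sx x).
  rewrite (measure_atoms (Psi x t) (cntA hT A)).
  rewrite (measure_atoms (Psi x t) (cntA hT (A `&` Sx x))).
  rewrite (measure_atoms (Psi x t) (cntA hT (A `&` ~` Sx x))).
  exact: esumID.
have z2 : Psi x t (A `&` ~` Sx x) = 0.
  apply/le_anti/andP; split; last exact: measure_ge0.
  apply: (le_trans (U2 x t _ t0 t1)).
  rewrite (measure_atoms (F x) (cntA hT _)) esum1 // => z [_ nz].
  by apply: atom0 => h; apply: nz.
rewrite split z2 adde0.
transitivity (f (nu x t) (A `&` Sx x)); last by [].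
rewrite gen (esum_single (x := x)) //.
- by rewrite nu_x clamp_id //= ltW.
- move=> w hw wx.
  have w0 : (0 < fine (nu x t [set w]))%R.
    by apply: fine_gt0; rewrite hw /= ltey_eq patom_fin.
  have w1 := (fine_atom01 (nu x t) w).2.
  apply/le_anti/andP; split; last exact: measure_ge0.
  apply: (le_trans (U2 w _ _ w0 w1)).
  rewrite (measure_atoms (F w) (cntA hT _)) esum1 // => z [_ hz].
  apply: (Fz hf _ wx); exact: hz.
- by rewrite /msupport /= nu_x clamp_id ?lte_fin // ltW.
Qed.

End Fwd2.

Local Open Scope ereal_scope.

Hint Extern 0 (_.-measurable _) => exact: I : core.
Hint Extern 0 (is_true (_ \in _.-measurable)) => (rewrite inE; exact: I) : core.

Section Conv.
Context (R : realType) (T : pointedType) (hT : countable [set: T]).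
Variable Phi : @mfamily R T.
Hypothesis hok : family_ok Phi.

Let Pa : forall x y, x <> y -> msupport (Phi x 1%R) `&` msupport (Phi y 1%R) = set0.
Proof. by case: hok. Qed.
Let Pb : forall x t, (0 < t <= 1)%R -> Phi x t setT = t%:E.
Proof. by case: hok. Qed.
Let Pc : forall x s t, (0 < s)%R -> (s < t)%R -> (t <= 1)%R ->
         forall A, Phi x s A <= Phi x t A.
Proof. by case: hok. Qed.

Lemma Phi_le s t x A : (0 < s)%R -> (s <= t)%R -> (t <= 1)%R -> Phi x s A <= Phi x t A.
Proof.
move=> s0 st t1; case: (ltP s t) => [st'|ts]; first exact: Pc.
by rewrite (_ : s = t) //; apply/le_anti; rewrite st ts.
Qed.

Lemma Phi_disj x y z : 0 < Phi x 1%R [set z] -> 0 < Phi y 1%R [set z] -> x = y.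
Proof.
move=> hx hy; apply: contrapT => xy.
have := Pa xy; move/seteqP => [/(_ z) h _]; exact: h.
Qed.

Lemma supp_fine (mu : probability (discr T) R) x : msupport mu x ->
  (0 < fine (mu [set x]))%R /\ (fine (mu [set x]) <= 1)%R.
Proof.
move=> hx; split; last exact: (fine_atom01 mu x).2.
by apply: fine_gt0; rewrite hx /= ltey_eq patom_fin.
Qed.

Lemma esum_supp (mu : probability (discr T) R) (a : T -> \bar R) :
  (forall x, 0 <= a x) -> (forall x, ~ msupport mu x -> a x = 0) ->
  \esum_(x in msupport mu) a x = \esum_(x in setT) a x.
Proof.
move=> a0 aout; rewrite (esumID (msupport mu) setT) // setTI.
by rewrite [X in _ + X]esum1 ?adde0 // => x [_ h]; exact: aout.
Qed.

Definition wq (mu : probability (discr T) R) (z : T) : \bar R :=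
  \esum_(x in msupport mu) Phi x (fine (mu [set x])) [set z].

Lemma wq0 mu z : 0 <= wq mu z.
Proof. by apply: esum_ge0 => x _; exact: measure_ge0. Qed.

Lemma wq_sum mu : \esum_(z in setT) wq mu z = 1.
Proof.
rewrite /wq esum_swap; last by move=> *; exact: measure_ge0.
transitivity (\esum_(x in msupport mu) mu [set x]).
  apply: eq_esum => x hx.
  rewrite -(measure_atoms (Phi x (fine (mu [set x]))) (cntA hT setT)).
  have [h0 h1] := supp_fine hx.
  transitivity ((fine (mu [set x]))%:E); last by rewrite fineK // patom_fin.
  by apply: Pb; rewrite h0 h1.
rewrite esum_supp; first exact: psum1.
- by move=> x; exact: measure_ge0.
- by move=> x h; exact: atom0.
Qed.

Definition fmap (mu : probability (discr T) R) : probability (discr T) R :=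
  wprob (wq mu).

Lemma fmapE mu A : fmap mu A = \esum_(z in A) wq mu z.
Proof. by rewrite /fmap wprobE //; [exact: wq0|exact: wq_sum]. Qed.

Lemma fmap_gen : generates Phi fmap.
Proof.
move=> mu A; rewrite fmapE /wq esum_swap; last by move=> *; exact: measure_ge0.
apply: eq_esum => x _; apply/esym.
exact: (measure_atoms (Phi x (fine (mu [set x]))) (cntA hT A)).
Qed.

Definition phi (mu : probability (discr T) R) x z : \bar R :=
  if x \in msupport mu then Phi x (fine (mu [set x])) [set z] else 0.

Lemma phi0 mu x z : 0 <= phi mu x z.
Proof. by rewrite /phi; case: ifP => // _; exact: measure_ge0. Qed.

Lemma phi_le mu x z : phi mu x z <= Phi x 1%R [set z].
Proof.
rewrite /phi; case: ifPn => [/set_mem hx|_]; last exact: measure_ge0.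
have [h0 h1] := supp_fine hx; exact: Phi_le.
Qed.

Lemma wqE mu z : wq mu z = \esum_(x in setT) phi mu x z.
Proof. by rewrite /wq esum_mkcond. Qed.

Lemma phi_out mu x z : ~ (0 < Phi x 1%R [set z]) -> phi mu x z = 0.
Proof.
move=> h; apply/le_anti; rewrite phi0 andbT.
by rewrite (le_trans (phi_le mu x z)) // atom0.
Qed.

Lemma min_wq mu nu z :
  mine (wq mu z) (wq nu z) = \esum_(x in setT) mine (phi mu x z) (phi nu x z).
Proof.
rewrite !wqE.
case: (pselect (exists x0, 0 < Phi x0 1%R [set z])) => [[x0 hx0]|nx].
  have other m x : x <> x0 -> phi m x z = 0.
    by move=> xx0; apply: phi_out => hx; apply: xx0; exact: Phi_disj hx hx0.
  have e1 m : \esum_(x in setT) phi m x z = phi m x0 z.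
    apply: esum_single; [move=> i _ ix; exact: other|by []|exact: phi0].
  have e2 : \esum_(x in setT) mine (phi mu x z) (phi nu x z) =
            mine (phi mu x0 z) (phi nu x0 z).
    apply: esum_single; [move=> i _ ix|by []|by rewrite le_min !phi0].
    by rewrite !other // mine0l.
  by rewrite !e1 e2.
have z0 m x : phi m x z = 0 by apply: phi_out => h; apply: nx; exists x.
by rewrite !esum1 // ?mine0l // => i _; rewrite !z0 // mine0l.
Qed.

Lemma sum_min_le x s t : (0 < s)%R -> (s <= t)%R -> (t <= 1)%R ->
  \esum_(z in setT) mine (Phi x s [set z]) (Phi x t [set z]) = s%:E.
Proof.
move=> s0 st t1.
transitivity (\esum_(z in setT) Phi x s [set z]).
  by apply: eq_esum => z _; apply/min_idPl; exact: Phi_le.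
rewrite -(measure_atoms (Phi x s) (cntA hT setT)).
apply: Pb; rewrite s0 /=; exact: le_trans st t1.
Qed.

Lemma phi_min mu nu x :
  \esum_(z in setT) mine (phi mu x z) (phi nu x z) = mine (mu [set x]) (nu [set x]).
Proof.
rewrite /phi.
case: (boolP (x \in msupport mu)) => [/set_mem hm|/negP hm]; last first.
  rewrite esum1 => [|z _]; last by rewrite mine0l // phi0.
  have -> : mu [set x] = 0 by apply: atom0 => h; apply: hm; exact: mem_set.
  by rewrite mine0l.
case: (boolP (x \in msupport nu)) => [/set_mem hn|/negP hn]; last first.
  rewrite esum1 => [|z _]; last by rewrite minC mine0l // measure_ge0.
  have -> : nu [set x] = 0 by apply: atom0 => h; apply: hn; exact: mem_set.
  by rewrite minC mine0l.
have [s0 s1] := supp_fine hm; have [t0 t1] := supp_fine hn.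
rewrite -[in RHS](fineK (patom_fin mu [set x])) -[in RHS](fineK (patom_fin nu [set x])).
case: (leP (fine (mu [set x])) (fine (nu [set x]))) => st.
  rewrite sum_min_le //; apply/esym/min_idPl; by rewrite lee_fin.
rewrite (eq_esum (b := fun z => mine (Phi x (fine (nu [set x])) [set z])
                                   (Phi x (fine (mu [set x])) [set z]))).
  rewrite sum_min_le //; [apply/esym/min_idPr; by rewrite lee_fin ltW|exact: ltW].
by move=> z _; rewrite minC.
Qed.

Lemma fmap_ov mu nu : ov (fmap mu) (fmap nu) = ov mu nu.
Proof.
rewrite /ov.
transitivity (\esum_(z in setT) mine (wq mu z) (wq nu z)).
  by apply: eq_esum => z _; rewrite !fmapE !esum_set1 ?wq0.
rewrite (eq_esum (fun z _ => min_wq mu nu z)) esum_swap.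
  by apply: eq_esum => x _; exact: phi_min.
by move=> *; rewrite le_min !phi0.
Qed.

End Conv.

Local Close Scope ereal_scope.
Unset Implicit Arguments.

Theorem theorem2p3 (R : realType) (T : pointedType)
    (hT : countable [set: T]) (x0 y0 : T) (hxy : x0 <> y0)
    (p : R) (hp : 0 < p) :
  (forall f : probability (discr T) R -> probability (discr T) R,
     isometric_embedding p f ->
     exists Phi : @mfamily R T,
       [/\ family_ok Phi, generates Phi f &
           forall Psi : @mfamily R T, family_ok Psi -> generates Psi f ->
             forall x t, 0 < t <= 1 -> forall A, Psi x t A = Phi x t A]) /\
  (forall Phi : @mfamily R T, family_ok Phi ->
     exists f : probability (discr T) R -> probability (discr T) R,
       isometric_embedding p f /\ generates Phi f).
Proof.
split.
  move=> f hiso.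
  have hf : forall m1 m2, ov (f m1) (f m2) = ov m1 m2.
    by move=> m1 m2; apply: (ov_Wp hT hp); exact: hiso.
  exists (Phi x0 y0 f); split.
  - by have := Phi_ok hT hxy hf.
  - by have := Phi_gen hT hxy hf.
  - by move=> Psi hok hgen x t ht A; apply: (Phi_uniq hT hxy hf).
move=> Phi hok; exists (fmap Phi); split.
  by move=> mu nu; apply: (Wp_ov hT hp); exact: fmap_ov.
by have := fmap_gen hT hok.
Qed.
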